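(* Let $Q:\mathbb{R}\to\mathbb{C}$ be a bounded function ($Q\in L^\infty(\mathbb{R})$, evaluated pointwise) and let $(u(z))_{z\in\mathbb{Z}}\subset\mathbb{C}$ with $u(z)=0$ for all $z<0$ and $u(0)\neq0$. Let $R(\xi):=\sum_{z\in\mathbb{Z}}Q(\xi-z)u(z)$ and let $\gamma\{\ddot u_+\}$ be as in the context. Then $$Q(\xi)=\frac{1}{u(0)}\sum_{z\in\mathbb{Z}}R(\xi-z)\,\gamma\{\ddot u_+\}(z)\qquad(\xi\in\mathbb{R})$$ whenever one of the following holds: (1) there exists $\xi_0\in\mathbb{R}$ with $Q(\xi)=0$ for all $\xi<\xi_0$; (2) $Q$ is non-decreasing on $\mathbb{R}$, $\sum_{z\in\mathbb{Z}}|u(z)|<\infty$, and $\sum_{z\in\mathbb{Z}}|\gamma\{\ddot u_+\}(z)\,Q(\xi-z)|<\infty$ for each $\xi\in\mathbb{R}$.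
   Context: Define $\ddot u_+(z):=\delta_{z,0}-\frac{u(z)}{u(0)}$ for $z\in\mathbb{Z}$ (where $\delta_{z,0}=1$ if $z=0$, else $0$). Discrete convolution powers: $\ddot u_+^{*0}(z):=\delta_{z,0}$ and $\ddot u_+^{*j}(z):=\sum_{y\in\mathbb{Z}}\ddot u_+(z-y)\ddot u_+^{*(j-1)}(y)$ for $j\ge1$ (finite sums since $\ddot u_+$ vanishes on negative integers). Let $\gamma\{\ddot u_+\}(z):=\sum_{j=0}^{z}\ddot u_+^{*j}(z)$ for $z\in\mathbb{Z}$ (empty sum $=0$, so $\gamma\{\ddot u_+\}(z)=0$ for $z<0$). *)

(* Defs.v *)
From mathcomp Require Import all_boot all_order all_algebra.
From mathcomp Require Import complex.
From mathcomp Require Import reals.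
Set Implicit Arguments. Unset Strict Implicit. Unset Printing Implicit Defensive.
Import Order.TTheory GRing.Theory Num.Theory.
Local Open Scope ring_scope.

Section Defs.
Variable R : realType.
Local Notation C := (complex R).

Definition series_to (a : nat -> C) (s : C) : Prop :=
  forall eps : R, 0 < eps -> exists N : nat, forall n : nat, (N <= n)%N ->
    `|\sum_(k < n) a k - s| < (eps%:C)%C.

Definition zsum_to (f : int -> C) (S : C) : Prop :=
  exists S1 S2 : C,
    series_to (fun k => f (Posz k)) S1 /\
    series_to (fun k => f (- (Posz k.+1))) S2 /\ S = S1 + S2.

Definition zabs_summable (f : int -> C) : Prop :=
  exists M : R, forall N : nat,
    \sum_(k < N) (`|f (Posz k)| + `|f (- (Posz k.+1))|) <= (M%:C)%C.

Definition uddp (u : int -> C) (z : int) : C :=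
  (z == 0)%:R - u z / u 0.

(* discrete convolution power; the sum over y is finite: y ranges over
   0..z since both factors vanish on negative integers *)
Fixpoint convpow (u : int -> C) (j : nat) (z : int) : C :=
  match j with
  | 0%N => (z == 0)%:R
  | j'.+1 => \sum_(0 <= k < `|z|%N.+1)
               (if (0 <= z) then uddp u (z - Posz k) * convpow u j' (Posz k) else 0)
  end.

Definition gammau (u : int -> C) (z : int) : C :=
  if (0 <= z) then \sum_(0 <= j < `|z|%N.+1) convpow u j z else 0.

End Defs.

(* Main.v *)
Require Import Defs.
From mathcomp Require Import all_boot all_order all_algebra.
From mathcomp Require Import complex.
From mathcomp Require Import reals.
Import Order.TTheory GRing.Theory Num.Theory.
Local Open Scope ring_scope.
Set Implicit Arguments. Unset Strict Implicit.

Section Ana.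
Variable R : realType.
Local Notation C := (complex R).

Definition cv (s : nat -> C) (l : C) := forall e : C, 0 < e ->
  exists N, forall n, (N <= n)%N -> `|s n - l| < e.

Lemma normCR (x : R) : `|x%:C%C| = `|x|%:C%C :> C.
Proof. by rewrite normc_def /= expr0n /= addr0 sqrtr_sqr. Qed.

Lemma mono_cv (s : nat -> C) (B : C) :
  (forall n, s n \is Num.real) -> (forall n, s n <= s n.+1) ->
  (forall n, s n <= B) -> exists l, (forall n, s n <= l) /\ cv s l.
Proof.
move=> sR sI sB.
pose r n := complex.Re (s n).
have sr n : s n = (r n)%:C%C by rewrite /r RRe_real.
have rB n : r n <= complex.Re B by move: (sB n); rewrite lecE => /andP[].
have rS m : r m <= r m.+1 by move: (sI m); rewrite (sr m) (sr m.+1) lecR.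
have rM n m : (n <= m)%N -> r n <= r m.
  elim: m => [|m IH]; first by rewrite leqn0 => /eqP->.
  rewrite leq_eqVlt => /orP[/eqP->//|/IH h]; exact: le_trans h (rS m).
pose E := (fun x : R => exists n, x = r n).
have ubE : forall n, r n <= sup E.
  move=> n; apply: (ub_le_sup (E := E)); last by exists n.
  by exists (complex.Re B) => x [k ->].
exists (sup E)%:C%C; split.
  by move=> n; rewrite sr lecR.
move=> e e0.
have eR : e = (complex.Re e)%:C%C by rewrite RRe_real // gtr0_real.
have re0 : 0 < complex.Re e by move: e0; rewrite eR ltcR.
have [y [N ->] hN] : exists2 y, E y & sup E - complex.Re e < y.
  by apply: sup_gt; [exists (r 0%N), 0%N | rewrite ltrBlDr ltrDl].
exists N => n Nn.
rewrite sr -rmorphB normCR eR ltcR ler0_norm ?subr_le0 // opprB.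
by rewrite ltrBlDr -ltrBlDl (lt_le_trans hN) // rM.
Qed.


Lemma cv_cst (c : C) : cv (fun=> c) c.
Proof. by move=> e e0; exists 0%N => n _; rewrite subrr normr0. Qed.

Lemma cvD s t l m : cv s l -> cv t m -> cv (fun n => s n + t n) (l + m).
Proof.
move=> hs ht e e0.
have e2 : 0 < e / 2 by rewrite divr_gt0 // ltr0n.
have [N1 h1] := hs _ e2; have [N2 h2] := ht _ e2.
exists (maxn N1 N2) => n; rewrite geq_max => /andP[n1 n2].
rewrite opprD addrACA (splitr e).
apply: le_lt_trans (ler_normD _ _) _.
by rewrite ltrD // ?h1 ?h2.
Qed.

Lemma cvMl (c : C) s l : cv s l -> cv (fun n => c * s n) (c * l).
Proof.
move=> hs e e0.
have [->|c0] := eqVneq c 0.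
  by exists 0%N => n _; rewrite !mul0r subrr normr0.
have nc : 0 < `|c| by rewrite normr_gt0.
have [N h] := hs _ (divr_gt0 e0 nc).
exists N => n Nn; rewrite -mulrBr normrM.
by rewrite -ltr_pdivlMl // mulrC h.
Qed.



Lemma cv_ext s t l : (forall n, s n = t n) -> cv s l -> cv t l.
Proof. by move=> st hs e e0; have [N h] := hs e e0; exists N => n /h; rewrite st. Qed.

Lemma cv_le s l c (e : C) : cv s l -> 0 <= e ->
  (exists N, forall n, (N <= n)%N -> `|s n - c| <= e) -> `|l - c| <= e.
Proof.
move=> hs e0 [N hN]; apply/ler_addgt0Pr => d d0.
have [N2 h2] := hs d d0.
pose n := maxn N N2.
apply: le_trans (ler_distD (s n) _ _) _.
rewrite addrC lerD // ?hN ?leq_maxl // distrC ltW // h2 // leq_maxr.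
by [].
Qed.

Lemma cv_sum (I : nat) (s : nat -> nat -> C) (l : nat -> C) :
  (forall k, cv (s k) (l k)) ->
  cv (fun n => \sum_(k < I) s k n) (\sum_(k < I) l k).
Proof.
move=> h; elim: I => [|I IH].
  rewrite big_ord0; apply: (cv_ext _ (cv_cst 0)) => n; by rewrite big_ord0.
rewrite big_ord_recr; apply: (cv_ext _ (cvD IH (h I))) => n.
by rewrite big_ord_recr.
Qed.


Lemma nonneg_cv (f : nat -> C) (B : C) : (forall k, 0 <= f k) ->
  (forall n, \sum_(k < n) f k <= B) -> exists l, cv (fun n => \sum_(k < n) f k) l.
Proof.
move=> f0 fB.
case: (@mono_cv (fun n => \sum_(k < n) f k) B) => [n|n|n|l [_ h]].
- by apply: ger0_real; apply: sumr_ge0.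
- by rewrite big_ord_recr lerDl.
- exact: fB.
by exists l.
Qed.

Lemma realC (r : R) : (r%:C%C : C) \is Num.real.
Proof. by apply/complex_realP; exists r. Qed.

Lemma Re_le (z : C) : `|(complex.Re z)%:C%C| <= `|z| :> C.
Proof.
rewrite normCR normc_def lecR -sqrtr_sqr; apply: ler_wsqrtr.
by rewrite lerDl sqr_ge0.
Qed.

Lemma Im_le (z : C) : `|(complex.Im z)%:C%C| <= `|z| :> C.
Proof.
rewrite normCR normc_def lecR -sqrtr_sqr; apply: ler_wsqrtr.
by rewrite lerDr sqr_ge0.
Qed.

Lemma part_bounds (z x : C) : x \is Num.real -> `|x| <= `|z| ->
  0 <= `|z| + x /\ `|z| + x <= `|z| + `|z|.
Proof.
move=> xR h; split.
  rewrite -[x]opprK subr_ge0; apply: le_trans h.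
  by rewrite -normrN real_ler_norm // rpredN.
by rewrite lerD2l (le_trans (real_ler_norm xR)).
Qed.

Lemma abs_cv (a : nat -> C) (B : C) : (forall n, \sum_(k < n) `|a k| <= B) ->
  exists l, cv (fun n => \sum_(k < n) a k) l.
Proof.
move=> aB.
pose x k : C := (complex.Re (a k))%:C%C.
pose y k : C := (complex.Im (a k))%:C%C.
have xb k := part_bounds (realC _) (Re_le (a k)).
have yb k := part_bounds (realC _) (Im_le (a k)).
have bnd (f : nat -> C) : (forall k, f k <= `|a k| + `|a k|) ->
    forall n, \sum_(k < n) f k <= B + B.
  move=> hf n; apply: le_trans; first by apply: ler_sum => k _; exact: hf.
  by rewrite big_split /=; apply: lerD; apply: aB.
have [P hP] := nonneg_cv (fun k => proj1 (xb k)) (bnd _ (fun k => proj2 (xb k))).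
have [Q hQ] := nonneg_cv (fun k => proj1 (yb k)) (bnd _ (fun k => proj2 (yb k))).
have [T hT] := nonneg_cv (fun k => normr_ge0 (a k)) aB.
exists ((P + -1 * T) + 'i%C * (Q + -1 * T)).
apply: (cv_ext _ (cvD (cvD hP (cvMl (-1) hT)) (cvMl 'i%C (cvD hQ (cvMl (-1) hT))))).
move=> n; rewrite !mulN1r -!sumrB mulr_sumr -big_split /=.
apply: eq_bigr => k _; rewrite !(addrC `|a k|) !addrK.
by rewrite {3}[a k]complexE.
Qed.


Lemma psum_mono (b : nat -> C) j J : (forall k, 0 <= b k) -> (J <= j)%N ->
  \sum_(0 <= k < J) b k <= \sum_(0 <= k < j) b k.
Proof.
move=> b0 Jj; rewrite (big_cat_nat (leq0n J) Jj) /= lerDl.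
by apply: sumr_ge0 => k _.
Qed.

Lemma seg_le (b : nat -> C) j M (B : C) : (forall k, 0 <= b k) ->
  (forall n, \sum_(k < n) b k <= B) -> \sum_(j <= k < M) b k <= B.
Proof.
move=> b0 bB; have B0 : 0 <= B by move: (bB 0%N); rewrite big_ord0.
have [jM|Mj] := leqP j M; last by rewrite big_geq // ltnW.
apply: (le_trans _ (bB M)); rewrite -(big_mkord xpredT) (big_cat_nat (leq0n j) jM) /= lerDr.
by apply: sumr_ge0 => k _.
Qed.

Lemma tail_small (b : nat -> C) (B : C) : (forall k, 0 <= b k) ->
  (forall n, \sum_(k < n) b k <= B) -> forall e : C, 0 < e ->
  exists J, forall j M, (J <= j)%N -> \sum_(j <= k < M) b k <= e.
Proof.
move=> b0 bB e e0.
case: (@mono_cv (fun n => \sum_(0 <= k < n) b k) B) => [n|n|n|l [pl hl]].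
- by apply: ger0_real; apply: sumr_ge0.
- by rewrite big_nat_recr //= lerDl.
- by rewrite big_mkord.
have [J hJ] := hl e e0.
exists J => j M Jj.
have [jM|Mj] := leqP j M; last by rewrite big_geq; [exact: ltW | exact: ltnW].
have -> : \sum_(j <= k < M) b k = \sum_(0 <= k < M) b k - \sum_(0 <= k < j) b k.
  by rewrite (big_cat_nat (leq0n j) jM) /= addrAC subrr add0r.
apply: le_trans (_ : l - \sum_(0 <= k < J) b k <= e).
  by apply: lerB; [exact: pl | exact: psum_mono].
apply: ltW; apply: le_lt_trans (hJ J (leqnn J)); rewrite distrC.
by apply: real_ler_norm; apply: ger0_real; rewrite subr_ge0.
Qed.

Lemma conv_small (w b : nat -> C) (W U : C) :
  (forall k, 0 <= w k) -> (forall n, \sum_(k < n) w k <= W) ->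
  (forall k, 0 <= b k) -> (forall n, \sum_(k < n) b k <= U) ->
  forall e : C, 0 < e -> exists N0, forall N M, (N0 <= N)%N ->
  \sum_(0 <= k < N) (w k * \sum_(N - k <= m < M) b m) <= e.
Proof.
move=> w0 wW b0 bU e e0.
have W0 : 0 <= W by move: (wW 0%N); rewrite big_ord0.
have U0 : 0 <= U by move: (bU 0%N); rewrite big_ord0.
have d0 : 0 < W + U + 1 by rewrite ltr_wpDl // addr_ge0.
pose e' := e / (W + U + 1).
have e'0 : 0 < e' by rewrite divr_gt0.
have [J hJ] := tail_small b0 bU e'0.
have [K hK] := tail_small w0 wW e'0.
exists (J + K)%N => N M JKN.
have JN : (J <= N)%N by apply: leq_trans JKN; rewrite leq_addr.
have KN : (K <= N - J)%N by rewrite leq_subRL // addnC.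
rewrite (big_cat_nat (leq0n (N - J)) (leq_subr J N)) /=.
apply: (le_trans (y := e' * W + U * e')).
  apply: lerD.
    apply: (le_trans (y := \sum_(0 <= k < N - J) w k * e')).
      apply: ler_sum_nat => k /andP[_ kNJ]; apply: ler_wpM2l => //.
      apply: hJ; rewrite leq_subRL; last by apply: ltnW; apply: leq_trans kNJ (leq_subr J N).
      by rewrite addnC -leq_subRL // ltnW.
    rewrite -mulr_suml mulrC; apply: ler_wpM2l; [exact: ltW | rewrite big_mkord; exact: wW].
  apply: (le_trans (y := \sum_(N - J <= k < N) w k * U)).
    apply: ler_sum_nat => k _; apply: ler_wpM2l => //; exact: seg_le.
  by rewrite -mulr_suml mulrC ler_wpM2l // hK.
by rewrite mulrC -mulrDl /e' mulrCA ger_pMr // ler_pdivrMr // mul1r lerDl ler01.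
Qed.

Section Alg.
Variable u : int -> C.
Hypothesis Hu0 : u 0 != 0.

Local Notation g n := (gammau u (Posz n)).
Local Notation cp j n := (convpow u j (Posz n)).
Local Notation d n := (uddp u (Posz n)).

Lemma cpS j n : cp j.+1 n = \sum_(0 <= k < n.+1) d (n - k)%N * cp j k.
Proof.
rewrite /=; apply: eq_big_nat => k /andP[_ kn].
by rewrite subzn.
Qed.

Lemma d0 : d 0 = 0.
Proof. by rewrite /uddp /= divff // subrr. Qed.

Lemma cp_big j n : (n < j)%N -> cp j n = 0.
Proof.
elim: j n => [//|j IH] n nj.
rewrite cpS big_nat_recr //= subnn d0 mul0r addr0.
apply: big1_seq => k /andP[_]; rewrite mem_index_iota => /andP[_ kn].
by rewrite IH ?mulr0 //; apply: leq_trans kn _.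
Qed.

Lemma g_ext n J : (n <= J)%N -> g n = \sum_(0 <= j < J.+1) cp j n.
Proof.
move=> nJ; rewrite /gammau /=.
rewrite (big_cat_nat (leq0n n.+1) (_ : n.+1 <= J.+1)%N) //=.
rewrite [X in _ = _ + X]big1_seq ?addr0 // => j /andP[_].
by rewrite mem_index_iota => /andP[nj _]; rewrite cp_big.
Qed.

Lemma conv_id n : \sum_(0 <= k < n.+1) d (n - k)%N * g k = g n - (n == 0)%:R.
Proof.
have -> : \sum_(0 <= k < n.+1) d (n - k)%N * g k =
          \sum_(0 <= k < n.+1) \sum_(0 <= j < n.+1) d (n - k)%N * cp j k.
  by apply: eq_big_nat => k /andP[_ kn]; rewrite (g_ext (J := n)) // mulr_sumr.
rewrite exchange_big_nat (g_ext (J := n.+1)) // [in RHS]big_nat_recl //.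
have -> : cp 0 n = (n == 0)%:R by [].
rewrite [in RHS]addrAC subrr add0r; apply: eq_big_nat => j _; by rewrite cpS.
Qed.

Lemma u_d m : u (Posz m) = u 0 * ((m == 0)%:R - d m).
Proof.
rewrite /uddp opprB addrCA subrr addr0 mulrC divfK //.
Qed.

End Alg.

End Ana.


Section B.
Variable R : realType.
Local Notation C := (complex R).
Variable u : int -> C.
Hypothesis Hu0 : u 0 != 0.
Local Notation g n := (gammau u (Posz n)).
Local Notation d n := (uddp u (Posz n)).

Lemma conv_u n : \sum_(0 <= k < n.+1) g k * u (Posz (n - k)%N) = u 0 * (n == 0)%:R.
Proof.
have -> : \sum_(0 <= k < n.+1) g k * u (Posz (n - k)%N) =
   u 0 * (\sum_(0 <= k < n.+1) g k * ((n - k)%N == 0)%:R -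
          \sum_(0 <= k < n.+1) d (n - k)%N * g k).
  rewrite -sumrB mulr_sumr; apply: eq_big_nat => k _.
  by rewrite (u_d Hu0) mulrCA mulrBr [d _ * _]mulrC.
rewrite (conv_id Hu0) big_nat_recr // subnn mulr1.
rewrite big1_seq; last first.
  move=> k /andP[_]; rewrite mem_index_iota => /andP[_ kn].
  by rewrite subn_eq0 leqNgt kn mulr0.
by rewrite /= add0r opprB addrCA subrr addr0.
Qed.

Lemma cvMr (c : C) s l : cv s l -> cv (fun n => s n * c) (l * c).
Proof.
move=> h; rewrite mulrC; apply: cv_ext (cvMl c h) => n; exact: mulrC.
Qed.

Section PB.
Variables (Q : R -> C) (Rf : R -> C) (xi : R).
Local Notation F k m := (Q (xi - (k + m)%N%:R) * u (Posz m) * g k).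

Lemma Dstep N : \sum_(0 <= k < N.+1) \sum_(0 <= m < N.+1 - k) F k m =
  \sum_(0 <= k < N) \sum_(0 <= m < N - k) F k m + \sum_(0 <= k < N.+1) F k (N - k)%N.
Proof.
rewrite big_nat_recr // [X in _ = _ + X]big_nat_recr // subSnn subnn big_nat1.
rewrite addrA; congr (_ + _).
rewrite -big_split; apply: eq_big_nat => k /andP[_ kN].
by rewrite subSn ?big_nat_recr // ltnW.
Qed.

Lemma D_val N : \sum_(0 <= k < N.+1) \sum_(0 <= m < N.+1 - k) F k m = u 0 * Q xi.
Proof.
have hF n : \sum_(0 <= k < n.+1) F k (n - k)%N = Q (xi - n%:R) * (u 0 * (n == 0)%:R).
  rewrite -(conv_u n) mulr_sumr; apply: eq_big_nat => k /andP[_ kn].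
  by rewrite subnKC // -mulrA [g k * _]mulrC.
elim: N => [|N IH].
  by rewrite (Dstep 0) big_geq // add0r (hF 0) subr0 mulr1 mulrC.
by rewrite (Dstep N.+1) IH (hF N.+1) mulr0 mulr0 addr0.
Qed.

Hypothesis hR : forall k, cv (fun M => \sum_(m < M) Q ((xi - k%:R) - m%:R) * u (Posz m))
                            (Rf (xi - k%:R)).
Hypothesis hE : forall e : C, 0 < e -> exists N0, forall N M, (N0 <= N)%N -> (N <= M)%N ->
  `|\sum_(0 <= k < N) \sum_(N - k <= m < M) F k m| <= e.

Lemma partB : cv (fun N => \sum_(k < N) Rf (xi - k%:R) * g k) (u 0 * Q xi).
Proof.
move=> e e0.
have e2 : 0 < e / 2 by rewrite divr_gt0 // ltr0n.
have [N0 hN0] := hE e2.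
exists N0.+1 => -[//|n'] N0n.
have cvT := cv_sum n'.+1 (fun k => cvMr (g k) (hR k)).
apply: le_lt_trans (_ : e / 2 < e); last by rewrite ltr_pdivrMr ?ltr0n // ltr_pMr // ltr1n.
apply: (cv_le cvT); first exact: ltW.
exists n'.+1 => M nM.
have -> : \sum_(k < n'.+1) (\sum_(m < M) Q (xi - k%:R - m%:R) * u (Posz m)) * g k =
   \sum_(0 <= k < n'.+1) \sum_(0 <= m < n'.+1 - k) F k m +
   \sum_(0 <= k < n'.+1) \sum_(n'.+1 - k <= m < M) F k m.
  rewrite -big_split big_mkord; apply: eq_bigr => k _.
  rewrite mulr_suml -big_cat_nat ?leq0n //; last first.
    by apply: leq_trans (leq_subr _ _) nM.
  by rewrite big_mkord; apply: eq_bigr => m _; rewrite natrD opprD addrA.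
rewrite D_val addrAC subrr add0r; apply: hN0; [exact: ltnW | exact: nM].
Qed.
End PB.

End B.



Section Main.
Variable R : realType.
Local Notation C := (complex R).

Lemma cv_series (a : nat -> C) s : cv (fun n => \sum_(k < n) a k) s -> series_to a s.
Proof. by move=> h eps e0; apply: h; rewrite (_ : 0 = (0:R)%:C%C) // ltcR. Qed.

Lemma zsum_pos (f : int -> C) S : series_to (fun k => f (Posz k)) S ->
  (forall k, f (- Posz k.+1) = 0) -> zsum_to f S.
Proof.
move=> h h0; exists S, 0; split => //; split; last by rewrite addr0.
apply: cv_series => e e0; exists 0%N => n _.
by rewrite big1 ?subrr ?normr0 // => k _; exact: h0.
Qed.

Lemma zabs_pos (f : int -> C) (M : C) :
  (forall N, \sum_(k < N) (`|f (Posz k)| + `|f (- Posz k.+1)|) <= M) ->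
  forall N, \sum_(k < N) `|f (Posz k)| <= M.
Proof.
move=> h N; apply: le_trans (h N); apply: ler_sum => k _; by rewrite lerDl.
Qed.

Lemma archi_K (a : R) : exists K : nat, a < K%:R.
Proof.
exists (Num.Def.archi_bound `|a|); apply: le_lt_trans (real_ler_norm (num_real a)) _.
exact: archi_boundP.
Qed.


Lemma Rf_ex1 (Q : R -> C) (u : int -> C) (xi0 : R) :
  (forall xi, xi < xi0 -> Q xi = 0) ->
  forall x, exists l, cv (fun M => \sum_(m < M) Q (x - m%:R) * u (Posz m)) l.
Proof.
move=> H0 x; have [K hK] := archi_K (x - xi0).
exists (\sum_(m < K) Q (x - m%:R) * u (Posz m)) => e e0; exists K => n Kn.
rewrite (big_ord_widen n (fun m => Q (x - m%:R) * u (Posz m)) Kn) [X in _ - X]big_mkcond /=.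
rewrite -sumrB big1 ?normr0 // => i _.
case: ifP => [_|/negbT]; first by rewrite subrr.
rewrite -leqNgt => Ki; rewrite H0 ?mul0r ?subr0 //.
rewrite ltrBlDr -ltrBlDl; apply: lt_le_trans hK _; by rewrite ler_nat.
Qed.

Lemma Rf_ex2 (Q : R -> C) (u : int -> C) (Mq Ub : C) :
  (forall x, `|Q x| <= Mq) -> (forall N, \sum_(k < N) `|u (Posz k)| <= Ub) ->
  forall x, exists l, cv (fun M => \sum_(m < M) Q (x - m%:R) * u (Posz m)) l.
Proof.
move=> HM HU x; have Mq0 : 0 <= Mq := le_trans (normr_ge0 _) (HM 0).
apply: (@abs_cv R (fun m => Q (x - m%:R) * u (Posz m)) (Mq * Ub)) => n.
apply: (le_trans (y := \sum_(k < n) Mq * `|u (Posz k)|)).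
  by apply: ler_sum => k _; rewrite normrM ler_wpM2r.
by rewrite -mulr_sumr ler_wpM2l.
Qed.

Lemma hE_of_w (Q : R -> C) (u : int -> C) (xi : R) (w : nat -> C) (W Ub : C) :
  (forall k, 0 <= w k) -> (forall n, \sum_(k < n) w k <= W) ->
  (forall N, \sum_(k < N) `|u (Posz k)| <= Ub) ->
  (forall k m, `|Q (xi - (k + m)%N%:R)| * `|gammau u (Posz k)| <= w k) ->
  forall e : C, 0 < e -> exists N0, forall N M, (N0 <= N)%N -> (N <= M)%N ->
  `|\sum_(0 <= k < N) \sum_(N - k <= m < M)
       (Q (xi - (k + m)%N%:R) * u (Posz m) * gammau u (Posz k))| <= e.
Proof.
move=> w0 wW HU hw e e0.
have [N0 h] := conv_small w0 wW (fun m => normr_ge0 (u (Posz m))) HU e0.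
exists N0 => N M N0N _; apply: le_trans (h N M N0N).
apply: le_trans (ler_norm_sum _ _ _) _.
apply: ler_sum_nat => k _; apply: le_trans (ler_norm_sum _ _ _) _.
rewrite mulr_sumr; apply: ler_sum_nat => m _.
by rewrite !normrM mulrAC ler_wpM2r.
Qed.


Lemma ltQ (xi : R) k m : xi - (k + m)%N%:R <= xi - k%:R.
Proof. by rewrite lerD2l lerN2 ler_nat leq_addr. Qed.

Lemma w_pos (Q : R -> C) (u : int -> C) (xi : R) :
  (forall x y : R, x <= y -> Q x <= Q y) -> (forall x, 0 <= Q x) ->
  forall k m, `|Q (xi - (k + m)%N%:R)| * `|gammau u (Posz k)| <=
              `|gammau u (Posz k) * Q (xi - k%:R)|.
Proof.
move=> Hm Hp k m; rewrite normrM mulrC ler_wpM2l //.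
by rewrite !ger0_norm // Hm // ltQ.
Qed.

Lemma w_neg (Q : R -> C) (u : int -> C) (y : R) (A : C) :
  (forall x y : R, x <= y -> Q x <= Q y) -> Q y < 0 ->
  (forall N, \sum_(k < N) `|gammau u (Posz k) * Q (y - k%:R)| <= A) ->
  forall N, \sum_(k < N) `|gammau u (Posz k)| <= A / `|Q y|.
Proof.
move=> Hm Hy HA N.
have Qy0 : 0 < `|Q y| by rewrite normr_gt0 lt_eqF.
rewrite ler_pdivlMr // mulr_suml; apply: le_trans (HA N).
apply: ler_sum => k _; rewrite normrM ler_wpM2l //.
have Qk : Q (y - k%:R) <= Q y by apply: Hm; rewrite lerBlDr lerDl.
rewrite !ler0_norm ?lerN2 //; [exact: ltW | exact: le_trans Qk (ltW Hy)].
Qed.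

End Main.

Unset Implicit Arguments.

Theorem theorem2 (R : realType) (Q : R -> complex R) (u : int -> complex R)
  (HQb : exists M : R, forall x : R, `|Q x| <= (M%:C)%C)
  (Hu_neg : forall z : int, z < 0 -> u z = 0)
  (Hu0 : u 0 != 0)
  (Hcase :
     (exists xi0 : R, forall xi : R, xi < xi0 -> Q xi = 0)
     \/
     [/\ (forall x : R, Q x \is Num.real),
         (forall x y : R, x <= y -> Q x <= Q y),
         zabs_summable u &
         (forall xi : R, zabs_summable (fun z => gammau u z * Q (xi - z%:~R)))]) :
  exists Rf : R -> complex R,
    (forall xi : R, zsum_to (fun z => Q (xi - z%:~R) * u z) (Rf xi)) /\
    (forall xi : R, exists S : complex R,
        zsum_to (fun z => Rf (xi - z%:~R) * gammau u z) S /\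
        Q xi = (u 0)^-1 * S).
Proof.
have [Mq HM] := HQb.
have Hex : forall x, exists l, cv (fun M => \sum_(m < M) Q (x - m%:R) * u (Posz m)) l.
  case: Hcase => [[xi0 H0]|[_ _ [Mu HMu] _]]; first exact: Rf_ex1 H0.
  exact: (Rf_ex2 HM (zabs_pos HMu)).
have [Rf hRf] := boolp.choice Hex.
exists Rf; split.
  move=> xi; apply: zsum_pos; first exact: cv_series (hRf xi).
  by move=> k; rewrite Hu_neg ?mulr0.
move=> xi; exists (u 0 * Q xi); split; last by rewrite mulKf.
apply: zsum_pos; last by move=> k; rewrite /gammau /= mulr0.
apply: cv_series; apply: (partB Hu0 (fun k => hRf (xi - k%:R))).
case: Hcase => [[xi0 H0]|[HR Hm [Mu HMu] HG]].
  move=> e e0; have [K hK] := archi_K (xi - xi0).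
  exists K => N M KN _; rewrite big1_seq ?normr0 ?ltW // => k /andP[_].
  rewrite mem_index_iota => /andP[_ kN].
  rewrite big1_seq // => m /andP[_]; rewrite mem_index_iota => /andP[km _].
  rewrite H0 ?mul0r //.
  rewrite ltrBlDr -ltrBlDl; apply: lt_le_trans hK _; rewrite ler_nat.
  apply: leq_trans KN _; by rewrite -leq_subLR.
have HU := zabs_pos HMu.
have [allpos|] := boolp.pselect (forall x, 0 <= Q x).
  have [A HA] := HG xi.
  have HA' : forall N, \sum_(k < N) `|gammau u (Posz k) * Q (xi - k%:R)| <= A%:C%C.
    exact: (@zabs_pos R (fun z => gammau u z * Q (xi - z%:~R)) A%:C%C HA).
  exact: (hE_of_w (w := fun k => `|gammau u (Posz k) * Q (xi - k%:R)|)
            (fun k => normr_ge0 _) HA' HU (w_pos u xi Hm allpos)).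
move/boolp.existsNP => [y /negP hy].
have Hy : Q y < 0 by rewrite real_ltNge ?real0.
have [A HA] := HG y.
have Mq0 : 0 <= Mq%:C%C := le_trans (normr_ge0 _) (HM 0).
apply: (hE_of_w (w := fun k => `|gammau u (Posz k)| * Mq%:C%C)
                (W := A%:C%C / `|Q y| * Mq%:C%C)) HU _ => //.
- by move=> k; rewrite mulr_ge0.
- by move=> n; rewrite -mulr_suml ler_wpM2r // (w_neg Hm Hy (@zabs_pos R (fun z => gammau u z * Q (y - z%:~R)) A%:C%C HA)).
- by move=> k m; rewrite mulrC ler_wpM2l.
Qed.
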